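(* Let $(X,\to,d_A)$ be a finitely branching metric transition system over $A$, and let $\alpha\colon\mathit{DPMet}(X)\to\mathrm{Pre}(X)$, $\alpha(d)=\{(x,y)\mid d(x,y)=0\}$, and $\gamma\colon\mathrm{Pre}(X)\to\mathit{DPMet}(X)$, $\gamma(R)=1-\chi_R$. Then $\alpha\circ\beta_S(d)=\beta_s\circ\alpha(d)$ for every $d\in\mathit{DPMet}(X)$, and consequently $\mu\,\beta_s=\alpha(\mu\,\beta_S)$.
   Context: $\delta(x)=\{(a,x')\mid x\xrightarrow{a}x'\}$, $\delta_a(x)=\{x'\mid x\xrightarrow{a}x'\}$; finitely branching: all $\delta(x)$ finite; $d_A$ is a metric on $A$ with values in $[0,1]$. $\mathit{DPMet}(X)$: directed pseudo-metrics on $X$, ordered pointwise; $\mathrm{Pre}(X)$: preorders on $X$, ordered by $\supseteq$; least fixpoints are taken in these lattices; $\chi_R$ is the characteristic function of $R$. $\beta_S(d)(x,y)=\bigvee_{(a,x')\in\delta(x)}\bigwedge_{(b,y')\in\delta(y)}\max\{d_A(a,b),d(x',y')\}$ (the directed simulation behaviour function; empty join $0$, empty meet $1$). $\beta_s(R)=\{(x_1,x_2)\mid\forall a\in A,\,y_1\in\delta_a(x_1)\,\exists y_2\in\delta_a(x_2)\colon y_1Ry_2\}$ (the simulation behaviour function). *)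

(* Defs.v *)
From HB Require Import structures.
From mathcomp Require Import all_boot all_order all_algebra.
From mathcomp Require Import boolp classical_sets cardinality reals.
Set Implicit Arguments. Unset Strict Implicit. Unset Printing Implicit Defensive.
Import Order.TTheory GRing.Theory Num.Theory.
Local Open Scope classical_set_scope.
Local Open Scope ring_scope.

Section Defs.
Variables (R : realType) (X A : Type).

Definition delta (trans : X -> A -> X -> Prop) (x : X) : set (A * X) :=
  [set p | trans x p.1 p.2].

Definition finitely_branching (trans : X -> A -> X -> Prop) : Prop :=
  forall x, finite_set (delta trans x).

Definition is_metric01 (dA : A -> A -> R) : Prop :=
  (forall a b, 0 <= dA a b <= 1) /\
  (forall a b, dA a b = 0 <-> a = b) /\
  (forall a b, dA a b = dA b a) /\
  (forall a b c, dA a c <= dA a b + dA b c).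

Definition DPMet (d : X -> X -> R) : Prop :=
  (forall x y, 0 <= d x y <= 1) /\
  (forall x, d x x = 0) /\
  (forall x y z, d x z <= d x y + d y z).

Definition preorder (Rl : X -> X -> Prop) : Prop :=
  (forall x, Rl x x) /\ (forall x y z, Rl x y -> Rl y z -> Rl x z).

Definition join0 (S : set R) : R := if pselect (S !=set0) then sup S else 0.
Definition meet1 (S : set R) : R := if pselect (S !=set0) then inf S else 1.

Definition betaS (trans : X -> A -> X -> Prop) (dA : A -> A -> R)
  (d : X -> X -> R) (x y : X) : R :=
  join0 [set (meet1 [set Num.max (dA ax.1 bz.1) (d ax.2 bz.2)
                     | bz in delta trans y])
        | ax in delta trans x].

Definition betas (trans : X -> A -> X -> Prop) (Rl : X -> X -> Prop)
  (x1 x2 : X) : Prop :=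
  forall a y1, trans x1 a y1 -> exists y2, trans x2 a y2 /\ Rl y1 y2.

Definition alpha (d : X -> X -> R) : X -> X -> Prop := fun x y => d x y = 0.

Definition gamma (Rl : X -> X -> Prop) : X -> X -> R :=
  fun x y => 1 - (if pselect (Rl x y) then 1 else 0).

Definition is_lfp_DPMet (F : (X -> X -> R) -> (X -> X -> R)) (m : X -> X -> R) : Prop :=
  DPMet m /\ F m = m /\
  (forall d, DPMet d -> F d = d -> forall x y, m x y <= d x y).

(* least fixpoint of F in Pre(X), ordered by reverse inclusion ⊇ *)
Definition is_lfp_Pre (F : (X -> X -> Prop) -> (X -> X -> Prop)) (Rl : X -> X -> Prop) : Prop :=
  preorder Rl /\ F Rl = Rl /\
  (forall S, preorder S -> F S = S -> forall x y, S x y -> Rl x y).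

End Defs.

(* Main.v *)
Require Import Defs.
From mathcomp Require Import all_boot all_order all_algebra.
From mathcomp Require Import boolp classical_sets cardinality reals.
From mathcomp Require Import lra.
Import Order.TTheory GRing.Theory Num.Theory.
Set Implicit Arguments. Unset Strict Implicit. Unset Printing Implicit Defensive.
Local Open Scope classical_set_scope.
Local Open Scope ring_scope.

Section Aux.
Variable R : realType.

Lemma meet1_le (S : set R) s : S s -> (forall t, S t -> 0 <= t) -> meet1 S <= s.
Proof.
move=> Ss H; rewrite /meet1; case: pselect => [ne|ne]; last by exfalso; apply: ne; exists s.
by apply: (ge_inf (ex_intro _ 0 H)).
Qed.

Lemma meet1_glb (S : set R) c : S !=set0 -> (forall t, S t -> c <= t) -> c <= meet1 S.
Proof.
move=> ne H; rewrite /meet1; case: pselect => [ne'|//].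
by apply: lb_le_inf.
Qed.

Lemma meet1_empty (S : set R) : ~ (S !=set0) -> meet1 S = 1.
Proof. by move=> ne; rewrite /meet1; case: pselect. Qed.

Lemma meet1_01 (S : set R) : (forall t, S t -> 0 <= t <= 1) -> 0 <= meet1 S <= 1.
Proof.
move=> H; rewrite /meet1; case: pselect => [ne|ne]; last by rewrite ler01 lexx.
have [s Ss] := ne.
apply/andP; split.
  by apply: lb_le_inf; [|move=> t /H /andP[]].
have [_ s1] := andP (H _ Ss); apply: le_trans s1.
by apply: (ge_inf (ex_intro _ 0 _)) => // t /H /andP[].
Qed.

Lemma join0_ge (S : set R) s : S s -> (forall t, S t -> t <= 1) -> s <= join0 S.
Proof.
move=> Ss H; rewrite /join0; case: pselect => [ne|ne]; last by exfalso; apply: ne; exists s.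
by apply: (sup_upper_bound (conj ne (ex_intro _ 1 H))).
Qed.

Lemma join0_lub (S : set R) c : 0 <= c -> (forall t, S t -> t <= c) -> join0 S <= c.
Proof.
move=> c0 H; rewrite /join0; case: pselect => [ne|//].
by apply: ge_sup.
Qed.

Lemma join0_01 (S : set R) : (forall t, S t -> 0 <= t <= 1) -> 0 <= join0 S <= 1.
Proof.
move=> H; apply/andP; split; last by apply: join0_lub => // t /H /andP[].
rewrite /join0; case: pselect => [ne|ne] //.
have [s Ss] := ne.
have [s0 _] := andP (H _ Ss); apply: le_trans s0 _.
by apply: (sup_upper_bound (conj ne (ex_intro _ 1 _))) => // t /H /andP[].
Qed.

Lemma seq_pos_lb (s : seq R) : exists2 e, 0 < e & forall x, x \in s -> 0 < x -> e <= x.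
Proof.
elim: s => [|x s [e e0 He]]; first by exists 1.
case: (ltP 0 x) => x0.
  exists (Num.min e x); first by rewrite lt_min e0 x0.
  move=> y; rewrite inE => /orP[/eqP->|ys] y0; first by rewrite ge_min lexx orbT.
  by rewrite ge_min He.
exists e => // y; rewrite inE => /orP[/eqP->|ys] y0; first by exfalso; lra.
exact: He.
Qed.

Lemma inf0_attained (S : set R) : finite_set S -> S !=set0 ->
  (forall t, S t -> 0 <= t) -> meet1 S = 0 -> S 0.
Proof.
move=> fS ne H; rewrite /meet1; case: pselect => [ne'|//] infS.
apply: contrapT => nS0.
have [s Es] := (finite_seqP S).1 fS.
have [e e0 He] := seq_pos_lb s.
have : e <= inf S.
  apply: lb_le_inf => // t St.
  have : t \in s by rewrite Es in St.
  move=> ts; apply: He => //; rewrite lt_neqAle H // andbT.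
  by apply/eqP => t0; apply: nS0; rewrite t0.
by move: infS => /= ->; lra.
Qed.

Lemma max_01 (p q : R) : 0 <= p <= 1 -> 0 <= q <= 1 -> 0 <= Num.max p q <= 1.
Proof.
move=> /andP[p0 p1] /andP[q0 q1]; apply/andP; split.
  by rewrite le_max p0.
by rewrite ge_max p1 q1.
Qed.

End Aux.

Section Main.
Variables (R : realType) (X A : Type)
  (trans : X -> A -> X -> Prop) (dA : A -> A -> R)
  (hfb : finitely_branching trans) (hdA : is_metric01 dA).

Let D := delta trans.
Let T (d : X -> X -> R) (a : A) (x' y : X) : set R :=
  [set Num.max (dA a bz.1) (d x' bz.2) | bz in D y].

Lemma betaSE d x y : betaS trans dA d x y = join0 [set meet1 (T d ax.1 ax.2 y) | ax in D x].
Proof. by []. Qed.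

Definition b01 (d : X -> X -> R) := forall x y, 0 <= d x y <= 1.

Lemma dA01 a b : 0 <= dA a b <= 1.
Proof. by case: hdA => H _; apply: H. Qed.

Lemma T01 d a x' y : b01 d -> forall t, T d a x' y t -> 0 <= t <= 1.
Proof. by move=> hd t [bz _ <-]; apply: max_01; [apply: dA01|apply: hd]. Qed.

Lemma meetT01 d a x' y : b01 d -> 0 <= meet1 (T d a x' y) <= 1.
Proof. by move=> hd; apply: meet1_01; apply: T01. Qed.

Lemma betaS01 d : b01 d -> b01 (betaS trans dA d).
Proof.
move=> hd x y; rewrite betaSE; apply: join0_01 => t [ax _ <-].
exact: meetT01.
Qed.

Lemma betaS_le_elem d x y a x' : b01 d -> trans x a x' ->
  meet1 (T d a x' y) <= betaS trans dA d x y.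
Proof.
move=> hd hx; rewrite betaSE; apply: join0_ge.
  by exists (a, x').
by move=> t [ax _ <-]; case/andP: (meetT01 ax.1 ax.2 y hd).
Qed.

Lemma betaS_lub d x y c : 0 <= c -> (forall a x', trans x a x' -> meet1 (T d a x' y) <= c) ->
  betaS trans dA d x y <= c.
Proof.
move=> c0 H; rewrite betaSE; apply: join0_lub => // t [[a x'] hx <-]; exact: H.
Qed.

Lemma betaS_mono d d' : b01 d -> b01 d' -> (forall x y, d x y <= d' x y) ->
  forall x y, betaS trans dA d x y <= betaS trans dA d' x y.
Proof.
move=> hd hd' le x y; apply: betaS_lub; first by case/andP: (betaS01 hd' x y).
move=> a x' hx; apply: le_trans (betaS_le_elem y hd' hx).
case: (pselect (D y !=set0)) => [[bz hbz]|ne].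
  apply: meet1_glb; first by exists (Num.max (dA a bz.1) (d' x' bz.2)), bz.
  move=> t [cz hcz <-]; apply: le_trans (_ : Num.max (dA a cz.1) (d x' cz.2) <= _).
    apply: meet1_le; first by exists cz.
    by move=> u /(T01 hd) /andP[].
  by rewrite ge_max le_max lexx /= le_max (le x' cz.2) orbT.
rewrite !meet1_empty //.
  by move=> [t [bz hbz _]]; apply: ne; exists bz.
by move=> [t [bz hbz _]]; apply: ne; exists bz.
Qed.

Lemma betaS_DPMet d : DPMet d -> DPMet (betaS trans dA d).
Proof.
move=> [hd [hrefl htri]].
have hd' : b01 (betaS trans dA d) by apply: betaS01.
split; first exact: hd'.
split.
  move=> x; apply/eqP; rewrite eq_le; case/andP: (hd' x x) => -> _; rewrite andbT.
  apply: betaS_lub => // a x' hx; apply: meet1_le.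
    exists (a, x') => //=.
    by case: hdA => _ [H _]; rewrite (proj2 (H a a) erefl) hrefl maxxx.
  by move=> t /(T01 hd) /andP[].
move=> x y z.
have [Bxy0 _] := andP (hd' x y); have [Byz0 _] := andP (hd' y z).
apply: betaS_lub; first lra.
move=> a x' hx.
have [mz0 mz1] := andP (meetT01 a x' z hd).
case: (pselect (D y !=set0)) => [neY|neY]; last first.
  have := betaS_le_elem y hd hx; rewrite meet1_empty; first lra.
  by move=> [t [bz hbz _]]; apply: neY; exists bz.
have v1le := betaS_le_elem y hd hx.
suff : meet1 (T d a x' z) - betaS trans dA d y z <= meet1 (T d a x' y) by lra.
apply: meet1_glb.
  by case: neY => bz hbz; exists (Num.max (dA a bz.1) (d x' bz.2)), bz.
move=> t [[b y'] hy <-] /=.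
set w := Num.max (dA a b) (d x' y').
have w0 : 0 <= w by case/andP: (max_01 (dA01 a b) (hd x' y')).
suff : meet1 (T d a x' z) - w <= betaS trans dA d y z by lra.
apply: le_trans (betaS_le_elem z hd hy).
case: (pselect (D z !=set0)) => [neZ|neZ]; last first.
  rewrite !meet1_empty; first lra.
    by move=> [t' [bz hbz _]]; apply: neZ; exists bz.
  by move=> [t' [bz hbz _]]; apply: neZ; exists bz.
apply: meet1_glb.
  by case: neZ => bz hbz; exists (Num.max (dA b bz.1) (d y' bz.2)), bz.
move=> u [[c z'] hz <-] /=.
suff : meet1 (T d a x' z) <= Num.max (dA a c) (d x' z').
  have : Num.max (dA a c) (d x' z') <= w + Num.max (dA b c) (d y' z'); last lra.
  have tA : dA a c <= dA a b + dA b c by case: hdA => _ [_ [_ H]]; apply: H.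
  have tX := htri x' y' z'.
  have h1 : dA a b <= w by rewrite /w le_max lexx.
  have h2 : d x' y' <= w by rewrite /w le_max lexx orbT.
  have h3 : dA b c <= Num.max (dA b c) (d y' z') by rewrite le_max lexx.
  have h4 : d y' z' <= Num.max (dA b c) (d y' z') by rewrite le_max lexx orbT.
  rewrite ge_max; apply/andP; split; lra.
apply: meet1_le; first by exists (c, z').
by move=> t' /(T01 hd) /andP[].
Qed.

Lemma part1 d : DPMet d -> alpha (betaS trans dA d) = betas trans (alpha d).
Proof.
move=> [hd [hrefl htri]].
apply: funext => x; apply: funext => y; apply: propext; split.
  move=> H a y1 hx.
  have hle := betaS_le_elem y hd hx.
  have [m0 _] := andP (meetT01 a y1 y hd).
  have me : meet1 (T d a y1 y) = 0 by rewrite /alpha in H; apply/eqP; rewrite eq_le m0 -H hle.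
  have neY : T d a y1 y !=set0.
    apply: contrapT => ne; move: me; rewrite meet1_empty //; lra.
  have := inf0_attained _ neY _ me.
  case.
  - by apply: finite_image; apply: hfb.
  - by move=> t /(T01 hd) /andP[].
  move=> [b y2] hy /= /eqP; rewrite eq_le ge_max => /andP[/andP[hab hd0] _].
  have hab0 : dA a b = 0 by apply/eqP; rewrite eq_le hab; case/andP: (dA01 a b).
  have ab : a = b by case: hdA => _ [Hm _]; apply/Hm.
  exists y2; split; first by rewrite ab.
  by rewrite /alpha; apply/eqP; rewrite eq_le hd0; case/andP: (hd y1 y2).
move=> H; rewrite /alpha; apply/eqP; rewrite eq_le.
case/andP: (betaS01 hd x y) => -> _; rewrite andbT.
apply: betaS_lub => // a x' hx.
have [y2 [hy e]] := H a x' hx.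
apply: meet1_le; first exists (a, y2) => //=.
  by rewrite e; case: hdA => _ [Hm _]; rewrite (proj2 (Hm a a) erefl) maxxx.
by move=> t /(T01 hd) /andP[].
Qed.

Definition PreF (p : X -> X -> R) := DPMet p /\ forall x y, betaS trans dA p x y <= p x y.
Definition LF (e : X -> X -> R) := DPMet e /\ forall p, PreF p -> forall x y, e x y <= p x y.
Definition mF (x y : X) : R := sup [set e x y | e in LF].

Lemma zeroL : LF (fun _ _ => 0).
Proof.
split; first by split; [move=> *; rewrite lexx ler01|split=> // *; rewrite addr0].
by move=> p [[hp _] _] x y; case/andP: (hp x y).
Qed.

Lemma mF_ne x y : [set e x y | e in LF] !=set0.
Proof. by exists 0, (fun _ _ => 0); first exact: zeroL. Qed.

Lemma mF_ub e x y : LF e -> e x y <= mF x y.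
Proof.
move=> he; apply: (sup_upper_bound (conj (mF_ne x y) (ex_intro _ 1 _))); last by exists e.
by move=> t [f [[hf _] _] <-]; case/andP: (hf x y).
Qed.

Lemma mF_le p : PreF p -> forall x y, mF x y <= p x y.
Proof.
move=> hp x y; apply: ge_sup; first exact: mF_ne.
by move=> t [f [_ hf] <-]; apply: hf.
Qed.

Lemma mF_L : LF mF.
Proof.
split; last by move=> p hp; apply: mF_le.
split.
  move=> x y; apply/andP; split; first by have := mF_ub x y zeroL.
  apply: ge_sup; first exact: mF_ne.
  by move=> t [f [[hf _] _] <-]; case/andP: (hf x y).
split.
  move=> x; apply/eqP; rewrite eq_le; apply/andP; split; last by have := mF_ub x x zeroL.
  apply: ge_sup; first exact: mF_ne.
  by move=> t [f [[_ [hf _]] _] <-]; rewrite hf.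
move=> x y z; apply: ge_sup; first exact: mF_ne.
move=> t [f hfL <-]; have [[_ [_ ht]] _] := hfL.
apply: le_trans (ht x y z) _; apply: lerD; exact: mF_ub.
Qed.

Lemma b01_DP d : DPMet d -> b01 d.
Proof. by case. Qed.

Lemma mF_pre : PreF mF.
Proof.
have [hm hmle] := mF_L.
split => // x y; apply: mF_ub; split; first exact: betaS_DPMet.
move=> p [hp hpp] u v; apply: le_trans (hpp u v).
apply: betaS_mono; try exact: b01_DP.
exact: hmle.
Qed.

Lemma mF_fix : betaS trans dA mF = mF.
Proof.
have [hm hmle] := mF_L; have [_ hpre] := mF_pre.
apply: funext => x; apply: funext => y; apply/eqP; rewrite eq_le hpre /=.
apply: mF_le; split; first exact: betaS_DPMet.
move=> u v; apply: betaS_mono.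
- by apply: b01_DP; apply: betaS_DPMet.
- exact: b01_DP.
- exact: hpre.
Qed.

Lemma gamma_pre (S : X -> X -> Prop) : preorder S -> betas trans S = S -> PreF (gamma R S).
Proof.
move=> [hr ht] hfix.
have g01 : b01 (gamma R S).
  by move=> x y; rewrite /gamma; case: pselect => hh; rewrite ?subrr ?subr0 lexx ler01.
split.
  split => //; split.
    by move=> x; rewrite /gamma; case: pselect => // hh; rewrite subrr.
  move=> x y z; rewrite /gamma.
  case: (pselect (S x z)) => hxz; first
    by rewrite subrr; apply: addr_ge0; case: pselect => hh; rewrite ?subrr ?subr0 ?ler01.
  case: (pselect (S x y)) => hxy; case: (pselect (S y z)) => hyz; rewrite ?subrr ?subr0; try lra.
  by exfalso; apply: hxz; apply: ht hyz.
move=> x y; case: (pselect (S x y)) => hxy; last first.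
  rewrite {2}/gamma; case: pselect => // hh; rewrite subr0.
  by case/andP: (betaS01 g01 x y).
have hb : betas trans S x y by rewrite hfix.
have -> : gamma R S x y = 0 by rewrite /gamma; case: pselect => // hh; rewrite subrr.
apply: betaS_lub => // a x' hx.
have [y2 [hy hS]] := hb a x' hx.
apply: meet1_le; first exists (a, y2) => //=.
  case: hdA => _ [Hm _]; rewrite (proj2 (Hm a a) erefl).
  by rewrite /gamma; case: pselect => // hh; rewrite subrr maxxx.
by move=> t /(T01 g01) /andP[].
Qed.

End Main.

Theorem mainTheorem18 (R : realType) (X A : Type)
  (trans : X -> A -> X -> Prop) (dA : A -> A -> R)
  (hfb : finitely_branching trans) (hdA : is_metric01 dA) :
  (forall d : X -> X -> R, DPMet d ->
     alpha (betaS trans dA d) = betas trans (alpha d)) /\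
  (exists m, is_lfp_DPMet (betaS trans dA) m) /\
  (forall m, is_lfp_DPMet (betaS trans dA) m ->
     is_lfp_Pre (betas trans) (alpha m)).
Proof.
split; first by move=> d hd; apply: part1.
have [hm _] := @mF_L _ _ _ trans dA.
have hfix := @mF_fix _ _ _ trans dA hdA.
split.
  exists (mF trans dA); split => //; split => //.
  move=> d hd hdfix; apply: mF_le => //; split => // x y; rewrite hdfix.
  exact: lexx.
move=> m [hm' [hmfix hmle]].
have [hm01 [hmr hmt]] := hm'.
split.
  split; first by move=> x; apply: hmr.
  move=> x y z; rewrite /alpha => e1 e2; apply/eqP; rewrite eq_le.
  case/andP: (hm01 x z) => -> _; rewrite andbT.
  by have := hmt x y z; rewrite e1 e2 addr0.
split.
  by rewrite -(part1 hfb hdA hm') hmfix.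
move=> S hS hSfix x y hxy.
rewrite /alpha; apply/eqP; rewrite eq_le; case/andP: (hm01 x y) => -> _; rewrite andbT.
apply: le_trans (hmle _ hm hfix x y) _.
apply: le_trans (mF_le (gamma_pre hdA hS hSfix) x y) _.
by rewrite /gamma; case: pselect => // hh; rewrite subrr.
Qed.
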